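(* Let $G=(V,E)$ be a finite graph with at least one vertex and $k>0$ an integer. Let $\mathcal F^{(2)}_k$ be the set of all stars $\sigma=\{(A_1,B_1),(A_2,B_2)\}\subseteq\vec S_k$ (with possibly $(A_1,B_1)=(A_2,B_2)$) such that $|B_1\cap B_2|<k$. The following are equivalent: (i) $G$ has a blockage of order $k-1$; (ii) $G$ has an $\mathcal F^{(2)}_k$-tangle of $S_k$; (iii) $G$ has no $S_k$-tree over $\mathcal F^{(2)}_k$; (iv) $G$ has path-width at least $k-1$.
   Context: An oriented vertex separation of $G$ is an ordered pair $(A,B)$ with $A\cup B=V$ and no edge between $A\setminus B$ and $B\setminus A$; $(A,B)\le(C,D)$ iff $A\subseteq C$ and $B\supseteq D$; $(A,B)^*=(B,A)$. $\vec S_k$ is the set of those with $|A\cap B|<k$, and $S_k$ the set of pairs $\{(A,B),(B,A)\}$ with $(A,B)\in\vec S_k$ (identified with unordered pairs $\{A,B\}$). A star is a nonempty set $\sigma$ with $\vec r\le\vec s^{\,*}$ for all distinct $\vec r,\vec s\in\sigma$. An orientation of $S_k$ contains exactly one of $(A,B),(B,A)$ for each pair; it is consistent if there are no distinct $r,s\in S_k$ with orientations $\vec r<\vec s$ such that $\vec r^{\,*},\vec s\in O$; an $\mathcal F$-tangle is a consistent orientation of $S_k$ no subset of which lies in $\mathcal F$. An $S_k$-tree over $\mathcal F$ is a pair $(T,\alpha)$, $T$ a finite tree with at least one edge, $\alpha$ mapping each ordered pair $(x,y)$ with $xy\in E(T)$ to $\vec S_k$ with $\alpha(y,x)=\alpha(x,y)^*$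 and $\{\alpha(x,t):xt\in E(T)\}\in\mathcal F$ for every node $t$. For $X\subseteq V$, $\partial(X)$ is the set of vertices of $X$ with a neighbour outside $X$. A blockage of order $k-1$ is a collection $\mathcal B$ of subsets of $V$ such that (B1) $|\partial(X)|<k$ for all $X\in\mathcal B$; (B2) $X'\in\mathcal B$ whenever $X'\subseteq X\in\mathcal B$ and $|\partial(X')|<k$; (B3) for every $\{X_1,X_2\}\in S_k$, exactly one of $X_1,X_2$ lies in $\mathcal B$. Path-width is the minimum width of a tree-decomposition whose tree is a path. *)

(* Defs.v *)
From mathcomp Require Import all_boot.
Set Implicit Arguments. Unset Strict Implicit. Unset Printing Implicit Defensive.

Definition osep (V : finType) := ({set V} * {set V})%type.

Definition sep_swap (V : finType) (s : osep V) : osep V := (s.2, s.1).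

Definition is_osep (V : finType) (e : rel V) (s : osep V) : bool :=
  (s.1 :|: s.2 == setT) &&
  [forall x, forall y, ~~ [&& x \in s.1 :\: s.2, y \in s.2 :\: s.1 & e x y]].

Definition in_vSk (V : finType) (e : rel V) (k : nat) (s : osep V) : bool :=
  is_osep e s && (#|s.1 :&: s.2| < k).

Definition sep_le (V : finType) (r s : osep V) : bool :=
  (r.1 \subset s.1) && (s.2 \subset r.2).

Definition is_star (V : finType) (sigma : {set osep V}) : Prop :=
  sigma != set0 /\
  forall r s, r \in sigma -> s \in sigma -> r != s -> sep_le r (sep_swap s).

Definition F2 (V : finType) (e : rel V) (k : nat) (sigma : {set osep V}) : Prop :=
  (forall s, s \in sigma -> in_vSk e k s) /\ is_star sigma /\
  exists r s, sigma = [set r; s] /\ #|r.2 :&: s.2| < k.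

Definition is_orientation (V : finType) (e : rel V) (k : nat) (O : {set osep V}) : Prop :=
  (forall s, s \in O -> in_vSk e k s) /\
  (forall s, in_vSk e k s -> (s \in O) || (sep_swap s \in O)) /\
  (forall s, in_vSk e k s -> s != sep_swap s -> ~~ ((s \in O) && (sep_swap s \in O))).

Definition consistent (V : finType) (e : rel V) (k : nat) (O : {set osep V}) : Prop :=
  ~ exists r s, [/\ in_vSk e k r && in_vSk e k s,
                   (r != s) && (r != sep_swap s),
                   sep_le r s,
                   sep_swap r \in O & s \in O].

Definition is_tangle (V : finType) (e : rel V) (k : nat)
    (F : {set osep V} -> Prop) (O : {set osep V}) : Prop :=
  [/\ is_orientation e k O, consistent e k O &
      forall sigma : {set osep V}, sigma \subset O -> ~ F sigma].

Definition is_tree_with_edge (N : finType) (f : rel N) : Prop :=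
  [/\ symmetric f, irreflexive f,
      (forall x y, connect f x y),
      (forall p : seq N, uniq p -> 3 <= size p -> ~~ cycle f p) &
      exists x y, f x y].

Definition Sk_tree_over (V : finType) (e : rel V) (k : nat)
    (F : {set osep V} -> Prop) (N : finType) (f : rel N) (alpha : N -> N -> osep V) : Prop :=
  [/\ is_tree_with_edge f,
      (forall x y, f x y -> in_vSk e k (alpha x y)),
      (forall x y, f x y -> alpha y x = sep_swap (alpha x y)) &
      (forall t, F [set alpha x t | x in [set x | f x t]])].

Definition has_Sk_tree_over (V : finType) (e : rel V) (k : nat)
    (F : {set osep V} -> Prop) : Prop :=
  exists (N : finType) (f : rel N) (alpha : N -> N -> osep V), Sk_tree_over e k F f alpha.

Definition boundary (V : finType) (e : rel V) (X : {set V}) : {set V} :=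
  [set x in X | [exists y, e x y && (y \notin X)]].

Definition is_blockage (V : finType) (e : rel V) (k : nat) (B : {set {set V}}) : Prop :=
  [/\ (forall X, X \in B -> #|boundary e X| < k),
      (forall X X' : {set V}, X \in B -> X' \subset X -> #|boundary e X'| < k -> X' \in B) &
      (forall s, in_vSk e k s -> (s.1 \in B) (+) (s.2 \in B))].

Definition is_path_decomp (V : finType) (e : rel V) (P : seq {set V}) : Prop :=
  [/\ 0 < size P,
      (forall v, exists2 W, W \in P & v \in W),
      (forall x y, e x y -> exists2 W, W \in P & (x \in W) && (y \in W)) &
      (forall i j l, i <= j -> j <= l -> l < size P ->
         nth set0 P i :&: nth set0 P l \subset nth set0 P j)].

Definition pd_width (V : finType) (P : seq {set V}) : nat :=
  (\max_(W <- P) #|W|).-1.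

Definition pathwidth_at_least (V : finType) (e : rel V) (m : nat) : Prop :=
  forall P, is_path_decomp e P -> m <= pd_width P.

(* Main.v *)
Require Import Defs.
From mathcomp Require Import all_boot.
From mathcomp Require Import zify.
Set Implicit Arguments. Unset Strict Implicit. Unset Printing Implicit Defensive.

Lemma no_walk (N : finType) (f D : rel N) : symmetric f -> irreflexive f ->
  (forall p : seq N, uniq p -> 3 <= size p -> ~~ cycle f p) ->
  (forall x y, D x y -> f x y) -> (forall x y, D x y -> exists2 z, D y z & z != x) ->
  forall x y, ~ D x y.
Proof.
move=> fsym firr facyc Df Dn.
pose fD := fun a b => D b a.
have sub : subrel fD f by move=> a b /Df; rewrite fsym.
have step : forall y x r, uniq (y :: x :: r) -> path fD y (x :: r) ->
    exists z, uniq (z :: y :: x :: r) && path fD z (y :: x :: r).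
  move=> y x r hu hp.
  have [z dyz nzx] := Dn _ _ (proj1 (andP hp)).
  case zin: (z \in y :: x :: r); last first.
    exists z; rewrite cons_uniq zin hu /=; rewrite /= in hp; by rewrite {1}/fD dyz hp.
  have nzy : z != y by apply/eqP => ezy; move: (Df _ _ dyz); rewrite ezy firr.
  move: zin; rewrite !inE (negbTE nzy) (negbTE nzx) /= => zr.
  move: hu hp; case/splitPr: zr => r1 r2 hu hp.
  pose c := y :: x :: rcons r1 z.
  have hc : c ++ r2 = y :: x :: r1 ++ z :: r2 by rewrite /c /= cat_rcons.
  have uc : uniq c by have := take_uniq (size c) (hu : uniq (y :: x :: r1 ++ z :: r2));
    rewrite -hc take_size_cat.
  have pc : path f y (x :: rcons r1 z).
    have := sub_path sub hp.
    have -> : x :: r1 ++ z :: r2 = (x :: rcons r1 z) ++ r2 by rewrite /= cat_rcons.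
    by rewrite cat_path => /andP [].
  exfalso; have hcyc : cycle f c.
    rewrite (@cycle_path N y) /c /= last_rcons; rewrite /= in pc; rewrite pc andbT fsym.
    exact: Df.
  have sz : 3 <= size c by rewrite /c /= size_rcons.
  by move: (facyc c uc sz); rewrite hcyc.
suff H : forall n y x r, #|N| - size (y :: x :: r) <= n ->
   uniq (y :: x :: r) -> path fD y (x :: r) -> False.
  move=> x y dxy; apply: (H _ y x [::] (leqnn _)) => /=.
    by rewrite inE andbT; apply/eqP => eyx; move: (Df _ _ dxy); rewrite eyx firr.
  by rewrite /fD dxy.
elim=> [|n IH] y x r hn hu hp; have [z /andP [hu' hp']] := step _ _ _ hu hp.
  have h1 : size (z :: y :: x :: r) <= #|N| by move/card_uniqP: hu' => <-; exact: max_card.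
  rewrite leqn0 subn_eq0 in hn; by have := leq_trans h1 hn; rewrite /= ltnn.
apply: (IH z y (x :: r)) => //.
move: hn; rewrite /=; lia.
Qed.

Lemma tangle_no_tree (V : finType) (e : rel V) (k : nat) (O : {set osep V})
  (N : finType) (f : rel N) (alpha : N -> N -> osep V) :
  is_tangle e k (F2 e k) O -> Sk_tree_over e k (F2 e k) f alpha -> False.
Proof.
case=> [[_ [tot _]] _ nF] [[fsym firr _ facyc [x0 [y0 fxy]]] vA swA node].
pose D := fun x y => f x y && (alpha x y \in O).
have Dn : forall x y, D x y -> exists2 z, D y z & z != x.
  move=> x y /andP [fxy0 hO].
  have : ~~ ([set alpha z y | z in [set z | f z y]] \subset O).
    apply/negP => hs; exact: (nF _ hs (node y)).
  case/subsetPn => s /imsetP [z]; rewrite inE => fzy -> hs.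
  have : sep_swap (alpha z y) \in O by move: (tot _ (vA _ _ fzy)); rewrite (negbTE hs).
  rewrite -(swA _ _ fzy) => hO'.
  exists z; first by rewrite /D hO' andbT fsym.
  by apply/eqP => ezx; rewrite ezx hO in hs.
have Df : forall x y, D x y -> f x y by move=> x y /andP [].
case/orP: (tot _ (vA _ _ fxy)) => h.
  by apply: (no_walk fsym firr facyc Df Dn (x := x0) (y := y0)); rewrite /D fxy h.
apply: (no_walk fsym firr facyc Df Dn (x := y0) (y := x0)).
by rewrite /D fsym fxy (swA _ _ fxy) h.
Qed.

Definition pf (m : nat) : rel 'I_m := fun i j => (i.+1 == j :> nat) || (j.+1 == i :> nat).

Lemma pf_acyc m (p : seq 'I_m) : uniq p -> 3 <= size p -> ~~ cycle (@pf m) p.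
Proof.
move=> hu hs; apply/negP => hc.
case: p hu hs hc => [//|i0 p0] hu hs hc.
have i0p : i0 \in i0 :: p0 by rewrite inE eqxx.
case: (arg_maxnP (fun i : 'I_m => val i) i0p) => M Mp Mmax.
have [q hrot] : exists q, rot (index M (i0 :: p0)) (i0 :: p0) = M :: q.
  by eexists; exact: rot_index Mp.
have hu' : uniq (M :: q) by rewrite -hrot rot_uniq.
have hs' : 3 <= size (M :: q) by rewrite -hrot size_rot.
have hc' : cycle (@pf m) (M :: q) by rewrite -hrot rot_cycle.
have Mq : forall j, j \in M :: q -> nat_of_ord j <= nat_of_ord M.
  by move=> j; rewrite -hrot mem_rot => /Mmax.
clear hrot; case: q hu' hs' hc' Mq => [//|a [//|b q']] hu' hs' hc' Mq.
rewrite /= rcons_path in hc'; case/and3P: hc' => fMa _ /andP [_ flM].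
set l := last b q' in flM.
have lq : l \in b :: q' by rewrite /l mem_last.
have aM : nat_of_ord a <= nat_of_ord M by apply: Mq; rewrite !inE eqxx orbT.
have lM : nat_of_ord l <= nat_of_ord M by apply: Mq; rewrite in_cons in_cons lq !orbT.
have ea : (nat_of_ord a).+1 = nat_of_ord M.
  case/orP: fMa => /eqP h; last exact: h.
  by move: aM; rewrite -h ltnn.
have el : (nat_of_ord l).+1 = nat_of_ord M.
  case/orP: flM => /eqP h; first exact: h.
  by move: lM; rewrite -h ltnn.
have eal : a = l by apply: val_inj; apply/eqP; rewrite -eqSS ea el.
by move: hu'; rewrite /= eal lq !andbF.
Qed.


Lemma pf_sym n : symmetric (@pf n).
Proof. by move=> i j; rewrite /pf orbC. Qed.

Lemma pf_irr n : irreflexive (@pf n).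
Proof. by move=> i; rewrite /pf orbb (gtn_eqF (ltnSn _)). Qed.

Lemma pf_conn n (x y : 'I_n) : connect (@pf n) x y.
Proof.
have H : forall j (Hj : j < n) (i : 'I_n), i <= j -> connect (@pf n) i (Ordinal Hj).
  elim=> [|j IH] Hj i hij.
    have -> : i = Ordinal Hj by apply: val_inj => /=; move: hij; rewrite leqn0 => /eqP.
    exact: connect0.
  case: (eqVneq (nat_of_ord i) j.+1) => [eij | nij].
    have -> : i = Ordinal Hj by apply: val_inj.
    exact: connect0.
  have hj' : j < n by apply: ltnW.
  apply: connect_trans (IH hj' i _) (connect1 _).
    by rewrite -ltnS ltn_neqAle nij hij.
  by rewrite /pf /= eqxx.
case: (leqP x y) => hxy.
  by have := H _ (ltn_ord y) x hxy; rewrite (_ : Ordinal _ = y) //; apply: val_inj.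
rewrite (sym_connect_sym (@pf_sym n)).
by have := H _ (ltn_ord x) y (ltnW hxy); rewrite (_ : Ordinal _ = x) //; apply: val_inj.
Qed.

Section Main.
Variables (V : finType) (e : rel V) (k : nat).
Hypothesis esym : symmetric e.
Hypothesis kpos : 0 < k.

Local Notation vS := (in_vSk e k).
Local Notation sw := (@sep_swap V).
Local Notation le := (@sep_le V).

Definition ord (s : osep V) := #|s.1 :&: s.2|.

Lemma osepP (s : osep V) : reflect (s.1 :|: s.2 = setT /\
  forall x y, x \in s.1 -> x \notin s.2 -> y \in s.2 -> y \notin s.1 -> e x y -> False)
  (is_osep e s).
Proof.
apply: (iffP andP) => [[/eqP-> /forallP H] | [-> H]]; split => //.
  move=> x y x1 x2 y2 y1 exy; move/forallP: (H x) => /(_ y).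
  by rewrite !inE x1 x2 y2 y1 exy.
apply/forallP => x; apply/forallP => y; apply/negP; rewrite !inE.
by case/and3P => /andP [x2 x1] /andP [y1 y2] exy; apply: (H x y).
Qed.

Lemma vSP s : vS s = is_osep e s && (ord s < k).
Proof. by []. Qed.

Lemma le_refl s : le s s.
Proof. by rewrite /sep_le !subxx. Qed.

Lemma le_trans a b c : le a b -> le b c -> le a c.
Proof.
case/andP => h1 h2 /andP [h3 h4]; apply/andP; split.
  exact: subset_trans h1 h3.
exact: subset_trans h4 h2.
Qed.

Lemma le_sw a b : le a b -> le (sw b) (sw a).
Proof. by case/andP => h1 h2; apply/andP. Qed.

Lemma swK s : sw (sw s) = s.
Proof. by case: s. Qed.

Lemma le_swE a b : le (sw a) (sw b) = le b a.
Proof. by rewrite /sep_le /= andbC. Qed.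

Lemma osep_sw s : is_osep e s -> is_osep e (sw s).
Proof.
case/osepP => hU hE; apply/osepP; split; first by rewrite /= setUC.
move=> x y x1 x2 y2 y1 exy; apply: (hE y x) => //; by rewrite esym.
Qed.

Lemma ord_sw s : ord (sw s) = ord s.
Proof. by rewrite /ord setIC. Qed.

Lemma vS_sw s : vS s -> vS (sw s).
Proof. by rewrite !vSP ord_sw => /andP [/osep_sw -> ->]. Qed.

Definition meet (a b : osep V) : osep V := (a.1 :&: b.1, a.2 :|: b.2).
Definition join (a b : osep V) : osep V := (a.1 :|: b.1, a.2 :&: b.2).

Lemma osep_meet a b : is_osep e a -> is_osep e b -> is_osep e (meet a b).
Proof.
case/osepP => ha ea /osepP [hb eb]; apply/osepP; split.
  apply/eqP; rewrite eqEsubset subsetT /=; apply/subsetP => v _.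
  have: v \in a.1 :|: a.2 by rewrite ha inE.
  have: v \in b.1 :|: b.2 by rewrite hb inE.
  rewrite !inE; by case: (v \in a.1); case: (v \in a.2); case: (v \in b.1); case: (v \in b.2).
move=> x y /=; rewrite !inE => /andP [xa xb] /norP [xa2 xb2] y2 y1 exy.
have ya: y \in a.1 :|: a.2 by rewrite ha inE.
have yb: y \in b.1 :|: b.2 by rewrite hb inE.
move: ya yb y1; rewrite !inE; case ya1: (y \in a.1) => /=.
  move=> _ /orP [->|yb2] //= yb1n.
  by apply: (eb x y).
move=> ya2 _ _; apply: (ea x y) => //; by rewrite ya1.
Qed.

Lemma osep_join a b : is_osep e a -> is_osep e b -> is_osep e (join a b).
Proof.
move=> ha hb; have := osep_sw (osep_meet (osep_sw ha) (osep_sw hb)).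
by [].
Qed.

Lemma submod a b : ord (meet a b) + ord (join a b) <= ord a + ord b.
Proof.
rewrite /ord /= -cardsUI -[X in _ <= X]cardsUI.
apply: leq_add; apply: subset_leq_card; apply/subsetP => v; rewrite !inE;
by case: (v \in a.1); case: (v \in a.2); case: (v \in b.1); case: (v \in b.2).
Qed.

Lemma le_meetl a b : le (meet a b) a.
Proof. by rewrite /sep_le subsetIl subsetUl. Qed.
Lemma le_meetr a b : le (meet a b) b.
Proof. by rewrite /sep_le subsetIr subsetUr. Qed.
Lemma le_joinl a b : le a (join a b).
Proof. by rewrite /sep_le subsetUl subsetIl. Qed.
Lemma le_joinr a b : le b (join a b).
Proof. by rewrite /sep_le subsetUr subsetIr. Qed.

Lemma meet_glb a b c : le c a -> le c b -> le c (meet a b).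
Proof.
case/andP => h1 h2 /andP [h3 h4]; apply/andP; split => /=.
  by rewrite subsetI h1 h3.
by rewrite subUset h2 h4.
Qed.

Lemma join_lub a b c : le a c -> le b c -> le (join a b) c.
Proof.
case/andP => h1 h2 /andP [h3 h4]; apply/andP; split => /=.
  by rewrite subUset h1 h3.
by rewrite subsetI h2 h4.
Qed.

Lemma meet_id a m : le m a -> meet a m = m.
Proof.
case/andP => h1 h2; rewrite /meet (setIidPr h1) (setUidPr h2); by case: m {h1 h2}.
Qed.

Lemma join_id a m : le a m -> join a m = m.
Proof.
case/andP => h1 h2; rewrite /join (setUidPr h1) (setIidPr h2); by case: m {h1 h2}.
Qed.


Definition step : rel (osep V) := fun s t =>
  [&& vS s, vS t, le s t & (s.1 == t.1) || (s.2 == t.2)].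
Definition reach := connect step.

Lemma reach_le s t : reach s t -> le s t.
Proof.
move/connectP => [p]; elim: p s => [|x p IH] s /=; first by move=> _ ->; apply: le_refl.
case/andP => /and4P [_ _ hle _] hp ht; exact: le_trans hle (IH _ hp ht).
Qed.

Lemma reach_vS s t : reach s t -> vS s -> vS t.
Proof.
move/connectP => [p]; elim: p s => [|x p IH] s /=; first by move=> _ ->.
by case/andP => /and4P [_ hx _ _] hp ht _; apply: (IH _ hp ht).
Qed.

Lemma step_sw s t : step s t -> step (sw t) (sw s).
Proof.
case/and4P => hs ht hle ho; apply/and4P; split; try exact: vS_sw.
  exact: le_sw.
by rewrite /= eq_sym orbC eq_sym.
Qed.

Lemma reach_sw s t : reach s t -> reach (sw t) (sw s).
Proof.
move/connectP => [p]; elim: p s => [|x p IH] s /=; first by move=> _ ->; exact: connect0.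
case/andP => hsx hp ht; apply: connect_trans (IH _ hp ht) _.
exact: connect1 (step_sw hsx).
Qed.

Lemma reach_map (f : osep V -> osep V) a b :
  (forall p q, reach a p -> reach q b -> step p q -> step (f p) (f q)) ->
  reach a b -> reach (f a) (f b).
Proof.
move=> H /connectP [p]; elim: p a H => [|x p IH] a H /=; first by move=> _ ->; exact: connect0.
case/andP => hax hp hb.
have rxb : reach x b by apply/connectP; exists p.
apply: connect_trans (connect1 (H a x (connect0 _ _) rxb hax)) _.
apply: IH hp hb => p' q rp rq st; apply: H rq st.
exact: connect_trans (connect1 hax) rp.
Qed.

Lemma step_meet p q m : step p q -> vS (meet p m) -> vS (meet q m) ->
  step (meet p m) (meet q m).
Proof.
case/and4P => _ _ /andP [h1 h2] ho hp hq; apply/and4P; split => //.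
  apply/andP; split; [exact: setSI | exact: setSU].
by case/orP: ho => /eqP h; rewrite /= h eqxx ?orbT.
Qed.

Lemma step_join p q m : step p q -> vS (join p m) -> vS (join q m) ->
  step (join p m) (join q m).
Proof.
case/and4P => _ _ /andP [h1 h2] ho hp hq; apply/and4P; split => //.
  apply/andP; split; [exact: setSU | exact: setSI].
by case/orP: ho => /eqP h; rewrite /= h eqxx ?orbT.
Qed.

Lemma exch a1 a2 b1 b2 : vS a1 -> reach a1 a2 -> vS b1 -> reach b1 b2 -> le b1 a2 ->
  exists m, [/\ vS m, vS (meet a1 m), reach (meet a1 m) m & reach m (join b2 m)].
Proof.
move=> va1 ra va1' rb hba.
have va2 : vS a2 := reach_vS ra va1.
pose P := fun x : osep V => [&& is_osep e x, le b1 x & le x a2].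
have Pa2 : P a2 by rewrite /P le_refl hba; case/andP: va2 => ->.
case: (arg_minnP ord Pa2) => m /and3P [om hbm hma] mmin.
have vm : vS m by rewrite vSP om; apply: leq_ltn_trans (mmin _ Pa2) _; case/andP: va2.
have Hl : forall p, reach a1 p -> reach p a2 -> vS (meet p m).
  move=> p r1 r2; have vp := reach_vS r1 va1.
  case/andP: (vp) => op lp.
  have Pj : P (join p m).
    rewrite /P osep_join // (le_trans hbm (le_joinr _ _)) /=.
    exact: join_lub (reach_le r2) hma.
  have := submod p m; have := mmin _ Pj => h1 h2.
  rewrite vSP osep_meet //=; apply: leq_ltn_trans lp.
  rewrite -(leq_add2r (ord (join p m))); apply: leq_trans h2 _; by rewrite leq_add2l.
have Hr : forall p, reach b1 p -> reach p b2 -> vS (join p m).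
  move=> p r1 r2; have vp := reach_vS r1 va1'.
  case/andP: (vp) => op lp.
  have Pj : P (meet p m).
    rewrite /P osep_meet // (le_trans (le_meetr _ _) hma) andbT.
    exact: meet_glb (reach_le r1) hbm.
  have := submod p m; have := mmin _ Pj => h1 h2.
  rewrite vSP osep_join //=; apply: leq_ltn_trans lp.
  rewrite -(leq_add2l (ord (meet p m))); apply: leq_trans h2 _; by rewrite addnC leq_add2r.
exists m; split => //.
- by apply: Hl => //; exact: connect0.
- rewrite -{2}(meet_id hma); apply: (@reach_map (fun p => meet p m)) ra => p q rp rq st.
  have r1 : reach p a2 by apply: connect_trans (connect1 st) rq.
  have r2 : reach a1 q by apply: connect_trans rp (connect1 st).
  exact: step_meet st (Hl _ rp r1) (Hl _ r2 rq).
- rewrite -{1}(join_id hbm); apply: (@reach_map (fun p => join p m)) rb => p q rp rq st.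
  have r1 : reach p b2 by apply: connect_trans (connect1 st) rq.
  have r2 : reach b1 q by apply: connect_trans rp (connect1 st).
  exact: step_join st (Hr _ rp r1) (Hr _ r2 rq).
Qed.


Definition lo : osep V := (set0, setT).
Definition hi : osep V := (setT, set0).

Lemma vS_lo : vS lo.
Proof.
rewrite vSP /ord /= set0I cards0 kpos andbT; apply/osepP; split => /=.
  by rewrite set0U.
by move=> x y; rewrite inE.
Qed.

Lemma vS_hi : vS hi.
Proof. exact: (vS_sw vS_lo). Qed.

Lemma le_lo z : le z lo -> z = lo.
Proof.
case/andP => /= h1 h2; rewrite /lo; case: z h1 h2 => a b /= h1 h2.
congr pair; apply/eqP; rewrite eqEsubset ?sub0set ?subsetT ?h1 ?h2 //.
Qed.

Lemma le_hi w : le hi w -> w = hi.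
Proof.
move=> h; rewrite -(swK w); have := le_lo (le_sw h); rewrite /lo => ->; by [].
Qed.

Definition Nrel x y := [&& vS x, vS y & [exists z, [exists w,
   [&& vS z, vS w, le z x, le y w & reach z w]]]].

Lemma NrelP x y : reflect (vS x /\ vS y /\ exists z w, [/\ vS z, vS w, le z x, le y w & reach z w])
  (Nrel x y).
Proof.
apply: (iffP and3P) => [[hx hy /existsP [z /existsP [w /and5P [*]]]] | [hx [hy [z [w [*]]]]]].
  by split => //; split => //; exists z, w.
split => //; apply/existsP; exists z; apply/existsP; exists w; exact/and5P.
Qed.

Lemma N_refl x : vS x -> Nrel x x.
Proof. move=> hx; apply/NrelP; split => //; split => //; exists x, x; split => //; try exact: le_refl; exact: connect0. Qed.

Lemma N_down x y : vS x -> vS y -> le y x -> Nrel x y.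
Proof. move=> hx hy hle; apply/NrelP; split => //; split => //; exists y, y; split => //; try exact: le_refl; exact: connect0. Qed.

Lemma N_step x y : step x y -> Nrel x y.
Proof.
move=> st; case/and4P: (st) => hx hy _ _; apply/NrelP; split => //; split => //; exists x, y; split => //; try exact: le_refl.
exact: connect1.
Qed.

Lemma N_trans x y t : Nrel x y -> Nrel y t -> Nrel x t.
Proof.
case/NrelP => hx [hy [z1 [w1 [vz1 vw1 l1 l2 r1]]]].
case/NrelP => _ [ht [z2 [w2 [vz2 vw2 l3 l4 r2]]]].
have [m [vm vzm rzm rmw]] := exch vz1 r1 vz2 r2 (le_trans l3 l2).
apply/NrelP; split => //; split => //; exists (meet z1 m), (join w2 m); split => //.
- exact: reach_vS rmw vm.
- exact: le_trans (le_meetl _ _) l1.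
- exact: le_trans l4 (le_joinl _ _).
- exact: connect_trans rzm rmw.
Qed.

Lemma N_dual x y : Nrel x y -> Nrel (sw y) (sw x).
Proof.
case/NrelP => hx [hy [z [w [vz vw l1 l2 r]]]]; apply/NrelP.
split; last split; try exact: vS_sw.
exists (sw w), (sw z); split; try exact: vS_sw; try exact: le_sw.
exact: reach_sw.
Qed.

Lemma N_lohi : Nrel lo hi -> reach lo hi.
Proof. by case/NrelP => _ [_ [z [w [_ _ /le_lo -> /le_hi -> r]]]]. Qed.

Lemma N_vS x y : Nrel x y -> vS x /\ vS y.
Proof. by case/and3P. Qed.

Definition good (O : {set osep V}) :=
  [&& lo \in O, [forall x, (x \in O) ==> vS x],
      [forall x, forall y, (x \in O) && Nrel x y ==> (y \in O)] &
      [forall y, (y \in O) ==> (sw y \notin O)]].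

Lemma goodP (O : {set osep V}) : reflect [/\ lo \in O, forall x, x \in O -> vS x,
      forall x y, x \in O -> Nrel x y -> y \in O &
      forall y, y \in O -> sw y \notin O] (good O).
Proof.
apply: (iffP and4P) => [[h1 /forallP h2 /forallP h3 /forallP h4] | [h1 h2 h3 h4]]; split => //.
- by move=> x; move/implyP: (h2 x).
- by move=> x y hx hn; move/forallP: (h3 x) => /(_ y) /implyP; apply; rewrite hx.
- by move=> y; move/implyP: (h4 y).
- by apply/forallP => x; apply/implyP => /h2.
- by apply/forallP => x; apply/forallP => y; apply/implyP => /andP [] /h3; apply.
- by apply/forallP => y; apply/implyP => /h4.
Qed.

Definition rank (s : osep V) := #|s.1| + #|~: s.2|.

Lemma rank_lt z x : le z x -> z != x -> rank z < rank x.
Proof.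
case/andP => h1 h2 hne.
have h2' : ~: z.2 \subset ~: x.2 by rewrite setCS.
have c1 := subset_leq_card h1; have c2 := subset_leq_card h2'.
rewrite /rank ltn_neqAle leq_add // andbT; apply: contra hne => /eqP heq.
have e1 : #|x.1| <= #|z.1| by move: heq c1 c2; clear; lia.
have e2 : #|~: x.2| <= #|~: z.2| by move: heq c1 c2; clear; lia.
have E1 : z.1 = x.1 by apply/eqP; rewrite eqEcard h1 e1.
have E2 : ~: z.2 = ~: x.2 by apply/eqP; rewrite eqEcard h2' e2.
by case: z x E1 E2 {h1 h2 h2' c1 c2 heq e1 e2} => a b [c d] /= -> /setC_inj ->.
Qed.

Lemma extend (O : {set osep V}) x : good O -> vS x -> x \notin O -> sw x \notin O ->
  (forall z, vS z -> le z x -> z != x -> (z \in O) || (sw z \in O)) ->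
  ~~ reach x hi -> good (O :|: [set t | Nrel x t]).
Proof.
case/goodP => lO vO cO sO vx xO sxO hmin nr.
have Nxx : ~~ Nrel x (sw x).
  apply/negP => /NrelP [_ [_ [z [w [vz vw lzx lw r]]]]].
  case: (eqVneq z x) => [ezx | nzx].
    move: r; rewrite ezx => r; apply: (negP nr).
    have lxw := reach_le r; have vw' := vw.
    apply: connect_trans r (connect1 _); apply/and4P; split => //; first exact: vS_hi.
      rewrite /sep_le subsetT sub0set //.
    apply/orP; left; apply/eqP.
    apply/eqP; rewrite eqEsubset subsetT /=.
    case/andP: vx => /osepP [<- _] _; rewrite subUset.
    by case/andP: lxw => -> _; case/andP: lw => ->.
  case/orP: (hmin z vz lzx nzx) => hz.
    apply: (negP sxO); apply: cO hz _; apply/NrelP; split => //; split => //; first exact: vS_sw.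
    by exists z, w; split => //; apply: le_refl.
  apply: (negP sxO); apply: cO hz _; apply: N_down; try exact: vS_sw.
  by rewrite le_swE.
apply/goodP; split.
- by rewrite inE lO.
- by move=> y; rewrite !inE => /orP [/vO //| /N_vS []].
- move=> a b; rewrite !inE => /orP [/cO h /h -> //| hxa hab].
  by rewrite (N_trans hxa hab) orbT.
- move=> y; rewrite !inE => /orP [hy|hy]; apply/negP => /orP [h|h].
  + by move/sO: hy; rewrite h.
  + have := N_dual h; rewrite swK => /(cO _ _ hy) hx.
    by rewrite hx in sxO.
  + have := N_dual hy => /(cO _ _ h) hx.
    by rewrite hx in sxO.
  + apply: (negP Nxx); apply: N_trans hy _.
    by have := N_dual h; rewrite swK.
Qed.

Lemma H_orient : ~~ reach lo hi -> exists O : {set osep V},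
  [/\ lo \in O, forall x, x \in O -> vS x,
      forall x y, x \in O -> Nrel x y -> y \in O,
      forall y, y \in O -> sw y \notin O &
      forall y, vS y -> (y \in O) || (sw y \in O)].
Proof.
move=> nlh.
pose O0 := [set y | Nrel lo y].
have g0 : good O0.
  apply/goodP; split.
  - by rewrite inE; apply: N_refl; exact: vS_lo.
  - by move=> x; rewrite inE => /N_vS [].
  - by move=> x y; rewrite !inE => h1 h2; exact: N_trans h1 h2.
  - move=> y; rewrite !inE => h1; apply/negP => h2.
    have := N_dual h2; rewrite swK => h3.
    by apply: (negP nlh); apply: N_lohi; exact: N_trans h1 h3.
case: (arg_maxnP (fun O : {set osep V} => #|O|) g0) => O gO Omax.
have [lO vO cO sO] := goodP _ gO.
exists O; split => //.
have key : forall y, vS y -> y \notin O -> sw y \notin O ->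
    exists x, [/\ le x y, vS x, x \notin O, sw x \notin O & reach x hi].
  move=> y vy yO syO.
  pose P := fun z => [&& vS z, z \notin O, sw z \notin O & le z y].
  have Py : P y by rewrite /P vy yO syO le_refl.
  case: (arg_minnP rank Py) => x /and4P [vx xO sxO lxy] xmin.
  exists x; split => //; apply/negPn/negP => nr.
  have hmin : forall z, vS z -> le z x -> z != x -> (z \in O) || (sw z \in O).
    move=> z vz lzx nzx; apply/negPn/negP; rewrite negb_or => /andP [zO szO].
    have Pz : P z by rewrite /P vz zO szO (le_trans lzx lxy).
    have := xmin _ Pz; have := rank_lt lzx nzx.
    by move=> h1 h2; have := leq_trans h1 h2; rewrite ltnn.
  have g1 := extend gO vx xO sxO hmin nr.
  have := Omax _ g1.
  have : O \proper O :|: [set t | Nrel x t].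
    apply/properP; split; first exact: subsetUl.
    exists x => //; by rewrite !inE N_refl // orbT.
  by move/proper_card => h1 h2; have := leq_trans h1 h2; rewrite ltnn.
move=> y vy; apply/negPn/negP; rewrite negb_or => /andP [yO syO].
have [x1 [l1 v1 _ _ r1]] := key y vy yO syO.
have vsy := vS_sw vy.
have syO2 : sw (sw y) \notin O by rewrite swK.
have [x2 [l2 v2 _ _ r2]] := key (sw y) vsy syO syO2.
apply: (negP nlh); apply: N_lohi; apply: (@N_trans _ (sw x2)).
  apply/NrelP; split; last split; [exact: vS_lo | exact: vS_sw | ].
  exists lo, (sw x2); split; try exact: vS_lo; try exact: vS_sw; try exact: le_refl.
  by have := reach_sw r2.
apply/NrelP; split; last split; [exact: vS_sw | exact: vS_hi | ].
exists x1, hi; split => //; try exact: vS_hi; try exact: le_refl.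
apply: le_trans l1 _; by rewrite -le_swE swK.
Qed.


Lemma vS_Tr (B : {set V}) : #|B| < k -> vS (setT, B).
Proof.
move=> hB; rewrite vSP /ord /= setTI hB andbT; apply/osepP; split => /=.
  by rewrite setTU.
by move=> x y _ _ _; rewrite inE.
Qed.

Lemma N_hi r : vS r -> #|r.2| < k -> Nrel r hi.
Proof.
move=> vr hr; apply: (@N_trans _ (setT, r.2)); apply: N_step; apply/and4P; split => //.
- exact: vS_Tr.
- by rewrite /sep_le subsetT subxx.
- by rewrite eqxx orbT.
- exact: vS_Tr.
- exact: vS_hi.
- by rewrite /sep_le subxx sub0set.
- by rewrite eqxx.
Qed.

Lemma O_tangle (O : {set osep V}) :
  [/\ lo \in O, forall x, x \in O -> vS x,
      forall x y, x \in O -> Nrel x y -> y \in O,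
      forall y, y \in O -> sw y \notin O &
      forall y, vS y -> (y \in O) || (sw y \in O)] ->
  is_tangle e k (F2 e k) O.
Proof.
case=> lO vO cO sO tO; split.
- split; first by move=> s; exact: vO.
  split => // s _ _; apply/negP => /andP [h1 h2]; by move/sO: h1; rewrite h2.
- move=> [r [s [/andP [vr vs] _ lrs srO sOO]]].
  have rO : r \in O by apply: cO sOO _; apply: N_down.
  by move/sO: rO; rewrite srO.
move=> sigma hsub [hv [[_ hstar] [r [s [esig hrs]]]]].
have rO : r \in O by apply: (subsetP hsub); rewrite esig !inE eqxx.
have sO' : s \in O by apply: (subsetP hsub); rewrite esig !inE eqxx orbT.
have vr := vO _ rO; have vs := vO _ sO'.
case: (eqVneq r s) => [ers | nrs].
  rewrite -ers setIid in hrs.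
  have := cO _ _ rO (N_hi vr hrs) => hO.
  by move/sO: lO; rewrite hO.
have lr : le r (sw s).
  by apply: hstar; rewrite ?esig ?inE ?eqxx ?orbT.
case/andP: (lr) => /= l1 l2.
have vm : vS (s.2, r.2).
  rewrite vSP /ord /= setIC hrs andbT.
  case/andP: vr => /osepP [ur er] _; case/andP: vs => /osepP [us es] _.
  apply/osepP; split => /=.
    apply/eqP; rewrite eqEsubset subsetT /= -ur setSU //.
  move=> x y x2 xr2 yr2 ys2 exy.
  have : y \in s.1 :|: s.2 by rewrite us inE.
  rewrite inE (negbTE ys2) orbF => ys1.
  have xs1 : x \notin s.1 by apply: contra xr2; apply: (subsetP l2).
  by apply: (es y x) => //; rewrite esym.
have N1 : Nrel r (sw s).
  apply: (@N_trans _ (s.2, r.2)); apply: N_step; apply/and4P; split => //.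
  - by rewrite /sep_le /= l1 subxx.
  - by rewrite eqxx orbT.
  - exact: vS_sw.
  - by rewrite /sep_le /= subxx l2.
  - by rewrite eqxx.
have := cO _ _ rO N1 => hO.
by move/sO: sO'; rewrite hO.
Qed.

Definition Yc (A : {set V}) := ~: A :|: boundary e A.

Lemma bnd_sub (A C : {set V}) : is_osep e (A, C) -> boundary e A \subset A :&: C.
Proof.
case/osepP => /= hu he; apply/subsetP => x; rewrite !inE => /andP [xA /existsP [y /andP [exy yA]]].
rewrite xA /=; apply/negPn/negP => xC.
have : y \in A :|: C by rewrite hu inE.
rewrite inE (negbTE yA) /= => yC.
exact: (he x y).
Qed.

Lemma vS_Y (A : {set V}) : #|boundary e A| < k -> vS (A, Yc A).
Proof.
move=> hb; rewrite vSP /ord /=.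
have -> : A :&: Yc A = boundary e A.
  by apply/setP => x; rewrite !inE; case: (x \in A).
rewrite hb andbT; apply/osepP; split => /=.
  by apply/eqP; rewrite eqEsubset subsetT /= /Yc setUA setUCr setTU.
move=> x y xA xY yY yA exy; move: xY; rewrite /Yc !inE xA /= => /existsP; apply.
by exists y; rewrite exy yA.
Qed.

Lemma le_Y (A C : {set V}) : is_osep e (A, C) -> le (A, C) (A, Yc A).
Proof.
move=> hs; rewrite /sep_le subxx /= /Yc subUset (subset_trans (bnd_sub hs)) ?subsetIr // andbT.
case/osepP: hs => /= hu _; apply/subsetP => x; rewrite inE => xA.
have : x \in A :|: C by rewrite hu inE.
by rewrite inE (negbTE xA).
Qed.

Lemma le_YY (X' X : {set V}) : X' \subset X -> le (X', Yc X') (X, Yc X).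
Proof.
move=> hs; rewrite /sep_le hs /= /Yc; apply/subsetP => x; rewrite !inE.
case xX': (x \in X').
  by rewrite (subsetP hs _ xX') /= => /existsP [y /andP [exy yX]]; apply/existsP; exists y;
     rewrite exy; apply: contra yX; apply: (subsetP hs).
by [].
Qed.

Lemma O_blockage (O : {set osep V}) :
  [/\ lo \in O, forall x, x \in O -> vS x,
      forall x y, x \in O -> Nrel x y -> y \in O,
      forall y, y \in O -> sw y \notin O &
      forall y, vS y -> (y \in O) || (sw y \in O)] ->
  is_blockage e k [set A | [exists C, (A, C) \in O]].
Proof.
case=> lO vO cO sO tO.
have inB : forall A C, vS (A, C) -> (A \in [set A | [exists C, (A, C) \in O]]) = ((A, C) \in O).
  move=> A C vAC; rewrite inE; apply/existsP/idP => [[C' hC'] | h]; last by exists C.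
  have vAC' := vO _ hC'.
  have hb : #|boundary e A| < k.
    case/andP: vAC' => o1 o2; apply: leq_ltn_trans o2; apply: subset_leq_card; exact: bnd_sub.
  have hY : (A, Yc A) \in O.
    apply: cO hC' _; apply: N_step; apply/and4P; split => //; first exact: vS_Y.
      by apply: le_Y; case/andP: vAC'.
    by rewrite eqxx.
  apply: cO hY _; apply: N_down => //; first exact: vS_Y.
  by apply: le_Y; case/andP: vAC.
split.
- move=> X; rewrite inE => /existsP [C /vO /andP [o1 o2]].
  apply: leq_ltn_trans o2; apply: subset_leq_card; exact: bnd_sub.
- move=> X X' hX hs hb; move: (hX); rewrite inE => /existsP [C hC].
  have vC := vO _ hC.
  have hbX : #|boundary e X| < k.
    case/andP: vC => o1 o2; apply: leq_ltn_trans o2; apply: subset_leq_card; exact: bnd_sub.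
  rewrite (inB _ _ (vS_Y hb)); apply: cO hC _.
  apply: (@N_trans _ (X, Yc X)).
    apply: N_step; apply/and4P; split => //; [exact: vS_Y | by apply: le_Y; case/andP: vC | by rewrite eqxx].
  apply: N_down; [exact: vS_Y | exact: vS_Y | exact: le_YY].
move=> s vs; have vsw := vS_sw vs.
case: s vs vsw => A C vs vsw.
rewrite (inB _ _ vs) (inB _ _ vsw).
have := tO _ vs; have := sO (A, C); rewrite /=.
by case: ((A, C) \in O); case: ((C, A) \in O) => //= ->.
Qed.


Lemma neqSS n : (n.+2 == n) = false.
Proof. by elim: n. Qed.

Lemma nth_size_last (d x : osep V) p : nth d (x :: p) (size p) = last x p.
Proof. by elim: p x => //= y p IH x. Qed.

Lemma reach_tree : 0 < #|V| -> reach lo hi -> has_Sk_tree_over e k (F2 e k).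
Proof.
move=> Vn /connectP [p hp hlast].
set m := size p.
pose s i := nth lo (lo :: p) i.
have s0 : s 0 = lo by [].
have sm : s m = hi by rewrite /s hlast nth_size_last.
have hst : forall i, i < m -> step (s i) (s i.+1) by move/(pathP lo): hp.
have vs : forall i, i <= m -> vS (s i).
  case=> [|i] hi; first exact: vS_lo.
  by case/and4P: (hst i hi).
have lohi : lo != hi.
  apply/negP => /eqP [] h _; move: Vn; rewrite -cardsT -h cards0.
  by [].
have m0 : 0 < m.
  rewrite lt0n; apply/negP => /eqP h; move: sm; rewrite h s0 => E.
  by rewrite E eqxx in lohi.
have sle : forall j, j < m -> le (s j) (s j.+1).
  by move=> j /hst /and4P [].
have sk : forall j, j < m -> #|(s j).2 :&: (s j.+1).1| < k.
  move=> j /hst /and4P [vj vj1 _ /orP [] /eqP h].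
    by rewrite -h setIC; case/andP: vj.
  by rewrite h setIC; case/andP: vj1.
pose a (t : nat) := if t == 0 then hi else s t.-1.
pose b (t : nat) := if t == m.+1 then hi else sw (s t).
pose alpha (i j : 'I_m.+2) :=
  if (i.+1 == j :> nat) then s i else if (j.+1 == i :> nat) then sw (s j) else lo.
exists 'I_m.+2, (@pf m.+2), alpha.
split.
- split; [exact: (@pf_sym _) | exact: (@pf_irr _) | exact: (@pf_conn _) | exact: (@pf_acyc _) | ].
  by exists (inord 0), (inord 1); rewrite /pf !inordK.
- move=> x y /orP [] /eqP h; rewrite /alpha.
    rewrite h eqxx; apply: vs; by have := ltn_ord y; rewrite -h ltnS.
  rewrite -h neqSS eqxx; apply: vS_sw; apply: vs; by have := ltn_ord x; rewrite -h ltnS.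
- move=> x y /orP [] /eqP h; rewrite /alpha.
    by rewrite -h neqSS eqxx.
  by rewrite -h neqSS eqxx swK.
move=> t.
have E : [set alpha x t | x in [set x | pf x t]] = [set a t; b t].
  apply/setP => z; apply/imsetP/set2P.
    case=> x; rewrite inE => /orP [] /eqP h ->.
      by left; rewrite /alpha /a -h eqxx.
    right; rewrite /alpha /b -h neqSS eqxx ltn_eqF //.
    by have := ltn_ord x; rewrite -h.
  case=> ->.
    case t0 : (nat_of_ord t == 0).
      exists (inord 1); first by rewrite inE /pf inordK // (eqP t0).
      by rewrite /alpha /a t0 inordK // (eqP t0) /= s0.
    have tp : 0 < nat_of_ord t by rewrite lt0n t0.
    have tlt' : t.-1 < m.+2 by apply: leq_ltn_trans (leq_pred _) (ltn_ord t).
    exists (inord t.-1).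
      by rewrite inE /pf (inordK tlt') (prednK tp) eqxx.
    by rewrite /alpha /a t0 (inordK tlt') (prednK tp) eqxx.
  case tm : (nat_of_ord t == m.+1).
    exists (inord m); first by rewrite inE /pf inordK // (eqP tm) eqxx.
    by rewrite /alpha /b tm inordK // (eqP tm) eqxx sm.
  have tlt : t.+1 < m.+2 by rewrite ltnS ltn_neqAle tm -ltnS ltn_ord.
  exists (inord t.+1); first by rewrite inE /pf inordK // eqxx orbT.
  by rewrite /alpha /b tm inordK // neqSS eqxx.
have va : vS (a t).
  rewrite /a; case: ifP => h; first exact: vS_hi.
  apply: vs; rewrite -ltnS prednK ?lt0n ?h //.
  by have := ltn_ord t; rewrite ltnS.
have vb : vS (b t).
  rewrite /b; case: ifP => h; first exact: vS_hi.
  apply: vS_sw; apply: vs; by rewrite -ltnS ltn_neqAle h -ltnS ltn_ord.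
have cases : (a t = hi /\ b t = hi) \/
    [/\ a t = s (t.-1), b t = sw (s (t.-1).+1) & t.-1 < m].
  case t0 : (nat_of_ord t == 0).
    left; split; first by rewrite /a t0.
    by rewrite /b (eqP t0) /= -/(s 0) s0.
  case tm : (nat_of_ord t == m.+1).
    left; split; last by rewrite /b tm.
    by rewrite /a t0 (eqP tm) /= -/(s m) sm.
  have tp : 0 < nat_of_ord t by rewrite lt0n t0.
  right; split; first by rewrite /a t0.
    by rewrite /b tm prednK.
  by rewrite -ltnS (prednK tp) ltn_neqAle tm -ltnS ltn_ord.
have hab : a t != b t -> le (a t) (sw (b t)).
  case: cases => [[-> ->]|[-> -> hlt]]; first by rewrite eqxx.
  by move=> _; rewrite swK; apply: sle.
have habk : #|(a t).2 :&: (b t).2| < k.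
  case: cases => [[-> ->]|[-> -> hlt]]; first by rewrite /= set0I cards0.
  exact: sk.
rewrite E; split.
  by move=> z; rewrite !inE => /orP [] /eqP ->.
split; last by exists (a t), (b t).
split.
  by apply/set0Pn; exists (a t); rewrite !inE eqxx.
move=> r r' hr hr' hne.
have nab : a t != b t.
  apply: contraNneq hne => eab; move: hr hr'; rewrite !inE -eab !orbb => /eqP -> /eqP ->.
  by [].
move: hr hr' hne; rewrite !inE => /orP [] /eqP -> /orP [] /eqP ->; rewrite ?eqxx //.
  by move=> _; first [exact: hab nab | rewrite -le_swE swK; exact: hab nab].
Qed.


Lemma transition (q : nat -> bool) m : ~~ q 0 -> q m -> exists2 j, j < m & ~~ q j && q j.+1.
Proof.
elim: m => [|m IH] h0 hm; first by rewrite hm in h0.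
case hq: (q m).
  by have [j jm hj] := IH h0 hq; exists j => //; exact: ltnW.
by exists m; rewrite // hq hm.
Qed.

Lemma reach_pd : 0 < #|V| -> reach lo hi ->
  exists P, is_path_decomp e P /\ pd_width P < k.-1.
Proof.
move=> Vn /connectP [p hp hlast].
set m := size p.
pose s i := nth lo (lo :: p) i.
have s0 : s 0 = lo by [].
have sm : s m = hi by rewrite /s hlast nth_size_last.
have hst : forall i, i < m -> step (s i) (s i.+1) by move/(pathP lo): hp.
have vs : forall i, i <= m -> vS (s i).
  case=> [|i] hi; first exact: vS_lo.
  by case/and4P: (hst i hi).
have mono : forall d i, i + d <= m -> le (s i) (s (i + d)).
  elim=> [|d IH] i hid; first by rewrite addn0; exact: le_refl.
  have hid' : i + d < m by rewrite addnS in hid.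
  apply: le_trans (IH i (ltnW hid')) _.
  by rewrite addnS; case/and4P: (hst (i + d) hid').
have mono' : forall i j, i <= j -> j <= m -> le (s i) (s j).
  by move=> i j hij hj; rewrite -(subnKC hij); apply: mono; rewrite subnKC.
pose bag (i : nat) := (s i).1 :&: (s i).2.
pose P := map (fun t : osep V => t.1 :&: t.2) (lo :: p).
have hP : forall i, i <= m -> nth set0 P i = bag i.
  by move=> i hi; rewrite /P (nth_map lo) //.
have sP : size P = m.+1 by rewrite /P size_map.
have entry : forall v, exists2 j, j < m & (v \notin (s j).1) && (v \in (s j.+1).1).
  move=> v; apply: (transition (q := fun j => v \in (s j).1)).
    by rewrite s0 inE.
  by rewrite sm inE.
have Astep : forall v j, j < m -> v \notin (s j).1 -> v \in (s j.+1).1 ->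
    (s j).2 = (s j.+1).2.
  move=> v j hj h1 h2; case/and4P: (hst j hj) => _ _ _ /orP [/eqP h|/eqP //].
  by rewrite h h2 in h1.
have inB2 : forall v j, j <= m -> v \notin (s j).1 -> v \in (s j).2.
  move=> v j hj; case/andP: (vs j hj) => /osepP [hu _] _ h1.
  have : v \in (s j).1 :|: (s j).2 by rewrite hu inE.
  by rewrite inE (negbTE h1).
have edge_bag : forall x y j, j < m -> y \notin (s j).1 -> y \in (s j.+1).1 ->
    x \in (s j.+1).1 -> e x y -> (x \in bag j.+1) && (y \in bag j.+1).
  move=> x y j hj y1 y2 x2 exy.
  have E := Astep _ _ hj y1 y2.
  have yb : y \in (s j).2 by apply: inB2 => //; exact: ltnW.
  have xb : x \in (s j).2.
    case x1 : (x \in (s j).1); last by apply: inB2 => //; [exact: ltnW | rewrite x1].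
    apply/negPn/negP => x2n.
    case/andP: (vs j (ltnW hj)) => /osepP [_ he] _.
    by apply: (he x y) => //; rewrite x1.
  by rewrite !inE x2 y2 -E xb yb.
exists P; split.
  split.
  - by rewrite sP.
  - move=> v; have [j hj /andP [h1 h2]] := entry v.
    exists (bag j.+1); first by rewrite -hP // ; apply: mem_nth; rewrite sP ltnS.
    rewrite inE h2 -(Astep _ _ hj h1 h2); apply: inB2 => //; exact: ltnW.
  - move=> x y exy.
    have [jx hjx /andP [x1 x2]] := entry x.
    have [jy hjy /andP [y1 y2]] := entry y.
    case: (leqP jx jy) => hxy.
      exists (bag jy.+1); first by rewrite -hP //; apply: mem_nth; rewrite sP ltnS.
      apply: edge_bag => //.
      by case/andP: (mono' jx.+1 jy.+1 hxy hjy) => /subsetP h _; exact: h.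
    exists (bag jx.+1); first by rewrite -hP //; apply: mem_nth; rewrite sP ltnS.
    rewrite andbC; apply: edge_bag => //; last by rewrite esym.
    by case/andP: (mono' jy.+1 jx.+1 (ltnW hxy) hjx) => /subsetP h _; exact: h.
  - move=> i j l hij hjl; rewrite sP ltnS => hl.
    have hj : j <= m := leq_trans hjl hl.
    have hi : i <= m := leq_trans hij hj.
    rewrite !hP //; apply/subsetP => v; rewrite !inE => /andP [/andP [vi _] /andP [_ vl]].
    case/andP: (mono' _ _ hij hj) => /subsetP h1 _.
    case/andP: (mono' _ _ hjl hl) => _ /subsetP h2.
    by rewrite h1 // h2.
have hmax : \max_(W <- P) #|W| <= k.-1.
  apply/bigmax_leqP_seq => W /nthP => /(_ set0) [i hi <-] _.
  rewrite sP ltnS in hi; rewrite hP // -ltnS prednK //; by case/andP: (vs i hi).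
have hmax1 : 0 < \max_(W <- P) #|W|.
  case/card_gt0P: Vn => v _.
  have [j hj /andP [h1 h2]] := entry v.
  apply: leq_trans (leq_bigmax_seq (F := fun W : {set V} => #|W|) (P := xpredT) (bag j.+1) _ _) => //.
    rewrite card_gt0; apply/set0Pn; exists v.
    rewrite inE h2 -(Astep _ _ hj h1 h2); apply: inB2 => //; exact: ltnW.
  by rewrite -hP //; apply: mem_nth; rewrite sP ltnS.
rewrite /pd_width; move: hmax hmax1; case: (\max_(W <- P) #|W|) => // M.
Qed.


Lemma blockage_pd (B : {set {set V}}) P : is_blockage e k B -> is_path_decomp e P ->
  pd_width P < k.-1 -> False.
Proof.
case=> B1 B2 B3 [Pn cov edg interp] hw.
set n := size P.
pose W i := nth set0 P i.
have hm : \max_(W <- P) #|W| < k.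
  move: hw; rewrite /pd_width; case: (\max_(W <- P) #|W|) => [_|M]; first exact: kpos.
  by case: k kpos => // k' _ /= h; rewrite ltnS.
have hW : forall i, i < n -> #|W i| < k.
  move=> i hi; apply: leq_ltn_trans hm.
  exact: (leq_bigmax_seq (F := fun W : {set V} => #|W|) (P := xpredT) (W i) (mem_nth _ hi)).
have cov' : forall v, exists2 i, i < n & v \in W i.
  move=> v; case: (cov v) => X /(nthP set0) [i hi <-] hv; by exists i.
have edg' : forall x y, e x y -> exists2 i, i < n & (x \in W i) && (y \in W i).
  move=> x y exy; case: (edg x y exy) => X /(nthP set0) [i hi <-] hv; by exists i.
pose U j := \bigcup_(i < n | i < j) W i.
pose R j := \bigcup_(i < n | j <= i) W i.
have inU : forall v j, v \in U j -> exists2 i : 'I_n, i < j & v \in W i.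
  move=> v j /bigcupP [i hi hv]; by exists i.
have inU' : forall v j i, i < n -> i < j -> v \in W i -> v \in U j.
  move=> v j i hi hij hv; apply/bigcupP; by exists (Ordinal hi).
have inR : forall v j, v \in R j -> exists2 i, (j <= i) && (i < n) & v \in W i.
  move=> v j /bigcupP [i hi hv]; exists i => //; by rewrite hi ltn_ord.
have inR' : forall v j i, i < n -> j <= i -> v \in W i -> v \in R j.
  move=> v j i hi hij hv; apply/bigcupP; by exists (Ordinal hi).
have sepj : forall j (X : {set V}), j < n -> U j \subset X -> X \subset U j.+1 -> vS (X, R j).
  move=> j X hj h1 h2; rewrite vSP; apply/andP; split.
    apply/osepP; split => /=.
      apply/eqP; rewrite eqEsubset subsetT /=; apply/subsetP => v _.
      case: (cov' v) => i hi hv; rewrite inE; case: (ltnP i j) => hij.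
        by rewrite (subsetP h1) // (inU' v j i).
      by rewrite (inR' v j i) ?orbT.
    move=> x y xX xR yR yX exy; case: (edg' x y exy) => i hi /andP [xi yi].
    case: (ltnP i j) => hij.
      by move/negP: yX; apply; apply: (subsetP h1); apply: (inU' y j i).
    by move/negP: xR; apply; apply: (inR' x j i).
  apply: leq_ltn_trans (hW j hj); apply: subset_leq_card; apply/subsetP => v.
  rewrite inE /= => /andP [/(subsetP h2) /inU [i1 hi1 v1] /inR [i2 /andP [hi2 hn2] v2]].
  have := interp i1 j i2; rewrite -ltnS hi1 hi2 hn2 => /(_ isT isT isT) /subsetP; apply.
  by rewrite inE v1 v2.
have Umono : forall j, U j \subset U j.+1.
  move=> j; apply/subsetP => v /inU [i hij hv]; apply: (inU' v j.+1 i) => //.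
  exact: ltnW.
have nT : setT \notin B.
  apply/negP => hT.
  have h0 : set0 \in B.
    apply: (B2 _ _ hT (sub0set _)); apply: leq_ltn_trans kpos.
    by rewrite leqn0 cards_eq0 -subset0; apply/subsetP => v; rewrite !inE => /andP [].
  by have := B3 _ vS_lo; rewrite /= h0 hT.
have UB : forall j, j <= n -> U j \in B.
  elim=> [|j IH] hj.
    have -> : U 0 = set0 by apply/setP => v; rewrite inE; apply/negP => /inU [].
    have := B3 _ vS_lo; rewrite /=; case: (set0 \in B) => //.
    by rewrite (negbTE nT).
  have hj' : j < n := hj.
  have UjB := IH (ltnW hj').
  have v1 := sepj j (U j) hj' (subxx _) (Umono j).
  have v2 := sepj j (U j.+1) hj' (Umono j) (subxx _).
  have := B3 _ v1; have := B3 _ v2; rewrite /= UjB /=.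
  case: (R j \in B) => /=; first by move=> _.
  by rewrite addbF.
have := UB n (leqnn _).
have -> : U n = setT.
  apply/setP => v; rewrite inE; case: (cov' v) => i hi hv; exact: (inU' v n i).
by rewrite (negbTE nT).
Qed.

End Main.

Theorem theorem5p10 (V : finType) (e : rel V) (k : nat) :
  symmetric e -> irreflexive e -> 0 < #|V| -> 0 < k ->
  [<-> exists B : {set {set V}}, is_blockage e k B;
       exists O : {set osep V}, is_tangle e k (F2 e k) O;
       ~ has_Sk_tree_over e k (F2 e k);
       pathwidth_at_least e k.-1].
Proof.
move=> esym eirr Vn kpos.
have h14 : (exists B : {set {set V}}, is_blockage e k B) -> pathwidth_at_least e k.-1.
  move=> [B hB] P hP; rewrite leqNgt; apply/negP => hlt.
  exact: (blockage_pd kpos hB hP hlt).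
have h42 : pathwidth_at_least e k.-1 -> exists O : {set osep V}, is_tangle e k (F2 e k) O.
  move=> hpw.
  have nr : ~~ reach e k (lo V) (hi V).
    apply/negP => r; have [P [hP hw]] := reach_pd esym kpos Vn r.
    by have := hpw P hP; rewrite leqNgt hw.
  have [O hO] := H_orient esym kpos nr.
  by exists O; apply: O_tangle.
have h23 : (exists O : {set osep V}, is_tangle e k (F2 e k) O) -> ~ has_Sk_tree_over e k (F2 e k).
  by move=> [O hO] [N [f [alpha hT]]]; exact: tangle_no_tree hO hT.
have h31 : ~ has_Sk_tree_over e k (F2 e k) -> exists B : {set {set V}}, is_blockage e k B.
  move=> ht.
  have nr : ~~ reach e k (lo V) (hi V).
    by apply/negP => r; apply: ht; exact: reach_tree esym kpos Vn r.
  have [O hO] := H_orient esym kpos nr.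
  by eexists; apply: O_blockage hO.
tfae => h.
- exact: h42 (h14 h).
- exact: h23 h.
- exact: h14 (h31 h).
- exact: h31 (h23 (h42 h)).
Qed.
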